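(* Let $c_1,\dots,c_n$ be elements of a partial ring $A$ and let $S=\{s_1,\dots,s_r\}$ be a subset of $\mathbb{N}[x_1,\dots,x_n]$. If $s_i(c_1,\dots,c_n)$ can be calculated in $A$ for all $i=1,\dots,r$, then there exists a unique partial ring homomorphism $\varphi\colon \mathbb{F}_1\langle x_1,\dots,x_n\mid \exists s_1,\dots,s_r\rangle\to A$ such that $\varphi(x_i)=c_i$ for $i=1,\dots,n$.
   Context: A partial magma is a set $A$ with a distinguished element $0$, a subset $A_2\subseteq A\times A$ of summable pairs and a map $+\colon A_2\to A$, such that $(0,a),(a,0)\in A_2$ and $a+0=0+a=a$, and $(a,b)\in A_2$ implies $(b,a)\in A_2$ and $a+b=b+a$. It is a partial monoid if, for all $a,b,c$: $(a,b),(a+b,c)\in A_2$ iff $(b,c),(a,b+c)\in A_2$, and then $(a+b)+c=a+(b+c)$. A partial ring is a partial monoid with a commutative associative multiplication with unit $1$ such that $0\cdot a=0$ and $(a_1,a_2)\in A_2$ implies $(a_1x,a_2x)\in A_2$ and $(a_1+a_2)x=a_1x+a_2x$. Partial ring homomorphisms preserve $0,1$, products, summability and sums. An $s$-tuple $(a_1,\dots,a_s)$ is summable, written $\in A_s$, if the sum $a_1+\dots+a_s$ can be calculated in $A$. Let $N=\mathbb{N}[x_1,\dots,x_n]$ (polynomials with coefficients in $\mathbb{N}$), regarded as a partial ring in which all pairs are summable. $\mathbb{F}_1\langle x_1,\dots,x_n\mid\exists s_1,\dots,s_r\rangle$ denotes the smallest partial subring of $N$ which contains every subsum of each $s_j$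 and in which every pair $(a,b)$ with $a+b$ a subsum of some $s_j$ is summable (a subsum of a polynomial means a sum of a sub-multiset of the monomials, with coefficient $1$, in its unique decomposition as a sum of such monomials). For $s\in N$ with unique decomposition $s=m_1+\dots+m_t$ into monomials with coefficient $1$, we say $s(c_1,\dots,c_n)$ can be calculated in $A$ if $(m_{i_1}(c),\dots,m_{i_u}(c))\in A_u$ for every subset $\{i_1,\dots,i_u\}\subseteq\{1,\dots,t\}$, where $m(c)$ is the value of the monomial at $(c_1,\dots,c_n)$. *)

(* Defs.v *)
From HB Require Import structures.
From mathcomp Require Import all_boot all_order all_algebra.
From mathcomp Require Import mpoly.
From Stdlib Require Import ProofIrrelevance ClassicalDescription.

Set Implicit Arguments.
Unset Strict Implicit.
Unset Printing Implicit Defensive.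

Import Order.TTheory GRing.Theory Num.Theory.
Local Open Scope ring_scope.

(* Partial rings.  The partial addition  + : A_2 -> A  is encoded as a  *)
(* total function [pr_add] whose values outside the summable pairs are *)
(* irrelevant (all axioms / morphism conditions only use it on A_2).   *)
Record partial_ring := PartialRing {
  pr_car :> Type;
  pr_zero : pr_car;
  pr_one : pr_car;
  pr_summable : pr_car -> pr_car -> Prop;
  pr_add : pr_car -> pr_car -> pr_car;
  pr_mul : pr_car -> pr_car -> pr_car;
  pr_summable0l : forall a, pr_summable pr_zero a;
  pr_summable0r : forall a, pr_summable a pr_zero;
  pr_add0r : forall a, pr_add a pr_zero = a;
  pr_add0l : forall a, pr_add pr_zero a = a;
  pr_summableC : forall a b, pr_summable a b -> pr_summable b a;
  pr_addC : forall a b, pr_summable a b -> pr_add a b = pr_add b a;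
  pr_summableA : forall a b c,
    (pr_summable a b /\ pr_summable (pr_add a b) c) <->
    (pr_summable b c /\ pr_summable a (pr_add b c));
  pr_addA : forall a b c,
    pr_summable a b -> pr_summable (pr_add a b) c ->
    pr_add (pr_add a b) c = pr_add a (pr_add b c);
  pr_mulA : forall a b c, pr_mul (pr_mul a b) c = pr_mul a (pr_mul b c);
  pr_mulC : forall a b, pr_mul a b = pr_mul b a;
  pr_mul1l : forall a, pr_mul pr_one a = a;
  pr_mul0l : forall a, pr_mul pr_zero a = pr_zero;
  pr_summableM : forall a1 a2 x,
    pr_summable a1 a2 -> pr_summable (pr_mul a1 x) (pr_mul a2 x);
  pr_mulDl : forall a1 a2 x, pr_summable a1 a2 ->
    pr_mul (pr_add a1 a2) x = pr_add (pr_mul a1 x) (pr_mul a2 x)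
}.

Definition pr_hom (A B : partial_ring) (f : A -> B) : Prop :=
  [/\ f (pr_zero A) = pr_zero B,
      f (pr_one A) = pr_one B,
      (forall a b, f (pr_mul a b) = pr_mul (f a) (f b)) &
      (forall a b, pr_summable a b ->
         pr_summable (f a) (f b) /\ f (pr_add a b) = pr_add (f a) (f b))].

(* (a_1, ..., a_s) \in A_s : the sum a_1 + ... + a_s can be calculated,  *)
(* i.e. each successive partial sum is summable with the next term.     *)
Fixpoint pr_summable_from (A : partial_ring) (acc : A) (l : seq A) : Prop :=
  match l with
  | [::] => True
  | a :: l' => pr_summable acc a /\ pr_summable_from (pr_add acc a) l'
  end.

Definition pr_summable_seq (A : partial_ring) (l : seq A) : Prop :=
  match l with
  | [::] => True
  | a :: l' => pr_summable_from a l'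
  end.

Definition pr_pow (A : partial_ring) (x : A) (k : nat) : A :=
  iter k (pr_mul x) (pr_one A).

Definition mon_eval (A : partial_ring) (n : nat) (c : 'I_n -> A)
    (m : 'X_{1..n}) : A :=
  \big[@pr_mul A / pr_one A]_(i < n) pr_pow (c i) (m i).

(* N = N[x_1, ..., x_n] : polynomials with integer coefficients all    *)
(* of which are nonnegative.                                           *)
Definition isN (n : nat) (p : {mpoly int[n]}) : Prop := forall m, 0 <= p@_m.

(* The unique decomposition of s as a sum of monomials with coefficient *)
(* 1 (each monomial m repeated s@_m times).                             *)
Definition mon_list (n : nat) (s : {mpoly int[n]}) : seq 'X_{1..n} :=
  flatten [seq nseq `|s@_m|%N m | m <- msupp s].

(* s(c_1,...,c_n) can be calculated in A: every sub-tuple of the values *)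
(* of the monomials of s is summable.                                   *)
Definition calculable (A : partial_ring) (n : nat) (c : 'I_n -> A)
    (s : {mpoly int[n]}) : Prop :=
  forall b : bitseq, size b = size (mon_list s) ->
    pr_summable_seq (mask b [seq mon_eval c m | m <- mon_list s]).

(* q is a subsum of s: a sum of a sub-multiset of the monomials of s. *)
Definition subsum (n : nat) (q s : {mpoly int[n]}) : Prop :=
  forall m, 0 <= q@_m <= s@_m.

(* (B, B2) is a partial subring of N (all pairs of N are summable). *)
Definition partial_subring (n : nat) (B : {mpoly int[n]} -> Prop)
    (B2 : {mpoly int[n]} -> {mpoly int[n]} -> Prop) : Prop :=
  [/\ (forall p, B p -> isN p),
      (B 0 /\ B 1),
      (forall p q, B p -> B q -> B (p * q)),
      (forall p q, B2 p q -> [/\ B p, B q & B (p + q)]) &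
      [/\ (forall p, B p -> B2 0 p /\ B2 p 0),
      (forall p q, B2 p q -> B2 q p),
      (forall a b c, B a -> B b -> B c ->
         (B2 a b /\ B2 (a + b) c) <-> (B2 b c /\ B2 a (b + c))) &
      (forall a b x, B2 a b -> B x -> B2 (a * x) (b * x))]].

Definition F1_gens (n : nat) (S : seq {mpoly int[n]})
    (B : {mpoly int[n]} -> Prop)
    (B2 : {mpoly int[n]} -> {mpoly int[n]} -> Prop) : Prop :=
  [/\ (forall i : 'I_n, B 'X_i),
      (forall s q, s \in S -> subsum q s -> B q) &
      (forall s a b, s \in S -> isN a -> isN b -> subsum (a + b) s -> B2 a b)].

Definition inF1 (n : nat) (S : seq {mpoly int[n]}) (p : {mpoly int[n]}) :=
  forall B B2, partial_subring B B2 -> F1_gens S B B2 -> B p.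

Definition sumF1 (n : nat) (S : seq {mpoly int[n]}) (p q : {mpoly int[n]}) :=
  forall B B2, partial_subring B B2 -> F1_gens S B B2 -> B2 p q.

Section F1.
Variables (n : nat) (S : seq {mpoly int[n]}).

Definition F1_car := {p : {mpoly int[n]} | inF1 S p}.

Lemma F1_sval_inj (x y : F1_car) : sval x = sval y -> x = y.
Proof.
case: x => x hx; case: y => y hy /= exy; subst y.
by rewrite (proof_irrelevance _ hx hy).
Qed.

Lemma inF1_0 : inF1 S 0. Proof. by move=> B B2 [_ [h0 h1] _ _ _]. Qed.
Lemma inF1_1 : inF1 S 1. Proof. by move=> B B2 [_ [h0 h1] _ _ _]. Qed.
Lemma inF1_M p q : inF1 S p -> inF1 S q -> inF1 S (p * q).
Proof. by move=> hp hq B B2 hB hG; case: (hB) => _ _ hM _ _; apply: hM; [exact: (hp B B2 hB hG)|exact: (hq B B2 hB hG)]. Qed.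
Lemma sumF1_in p q : sumF1 S p q -> inF1 S (p + q).
Proof. move=> h B B2 hB hG; case: (hB) => _ _ _ hs _; case: (hs p q (h B B2 hB hG)) => _ _ H; exact: H. Qed.
Lemma sumF1_inl p q : sumF1 S p q -> inF1 S p.
Proof. move=> h B B2 hB hG; case: (hB) => _ _ _ hs _; case: (hs p q (h B B2 hB hG)) => H _ _; exact: H. Qed.
Lemma sumF1_inr p q : sumF1 S p q -> inF1 S q.
Proof. move=> h B B2 hB hG; case: (hB) => _ _ _ hs _; case: (hs p q (h B B2 hB hG)) => _ H _; exact: H. Qed.

Definition F1_zero : F1_car := exist _ 0 inF1_0.
Definition F1_one : F1_car := exist _ 1 inF1_1.
Definition F1_mul (x y : F1_car) : F1_car :=
  exist _ (sval x * sval y) (inF1_M (proj2_sig x) (proj2_sig y)).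
Definition F1_summable (x y : F1_car) : Prop := sumF1 S (sval x) (sval y).
Definition F1_add (x y : F1_car) : F1_car :=
  match excluded_middle_informative (inF1 S (sval x + sval y)) with
  | left h => exist _ (sval x + sval y) h
  | right _ => F1_zero
  end.

Lemma F1_addE x y : inF1 S (sval x + sval y) -> sval (F1_add x y) = sval x + sval y.
Proof. by move=> h; rewrite /F1_add; case: excluded_middle_informative. Qed.

Lemma F1_summable0l a : F1_summable F1_zero a.
Proof. by move=> B B2 hB hG; case: (hB) => _ _ _ _ [h0 _ _ _]; case: (h0 _ (proj2_sig a B B2 hB hG)). Qed.
Lemma F1_summable0r a : F1_summable a F1_zero.
Proof. by move=> B B2 hB hG; case: (hB) => _ _ _ _ [h0 _ _ _]; case: (h0 _ (proj2_sig a B B2 hB hG)). Qed.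
Lemma F1_add0r a : F1_add a F1_zero = a.
Proof. by apply: F1_sval_inj; rewrite F1_addE /= addr0 //; apply: proj2_sig. Qed.
Lemma F1_add0l a : F1_add F1_zero a = a.
Proof. by apply: F1_sval_inj; rewrite F1_addE /= add0r //; apply: proj2_sig. Qed.
Lemma F1_summableC a b : F1_summable a b -> F1_summable b a.
Proof. by move=> h B B2 hB hG; case: (hB) => _ _ _ _ [_ hC _ _]; apply: hC; exact: (h B B2 hB hG). Qed.
Lemma F1_addC a b : F1_summable a b -> F1_add a b = F1_add b a.
Proof.
move=> h; have hab := sumF1_in h.
have hba : inF1 S (sval b + sval a) by rewrite addrC.
apply: F1_sval_inj; rewrite (F1_addE hab) (F1_addE hba).
exact: addrC.
Qed.
Lemma F1_summableA a b c :
  (F1_summable a b /\ F1_summable (F1_add a b) c) <->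
  (F1_summable b c /\ F1_summable a (F1_add b c)).
Proof.
split=> -[h1 h2].
- have e : sval (F1_add a b) = sval a + sval b by rewrite F1_addE //; exact: sumF1_in.
  move: h2; rewrite /F1_summable e => h2.
  have H : forall B B2, partial_subring B B2 -> F1_gens S B B2 ->
     B2 (sval b) (sval c) /\ B2 (sval a) (sval b + sval c).
    move=> B B2 hB hG; case: (hB) => _ _ _ _ [_ _ hA _].
    apply: (proj1 (hA _ _ _ (proj2_sig a B B2 hB hG) (proj2_sig b B B2 hB hG) (proj2_sig c B B2 hB hG))).
    by split; [exact: (h1 B B2 hB hG)|exact: (h2 B B2 hB hG)].
  have hbc : F1_summable b c by move=> B B2 hB hG; case: (H B B2 hB hG).
  split=> //; rewrite /F1_summable F1_addE; last exact: sumF1_in.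
  by move=> B B2 hB hG; case: (H B B2 hB hG).
- have e : sval (F1_add b c) = sval b + sval c by rewrite F1_addE //; exact: sumF1_in.
  move: h2; rewrite /F1_summable e => h2.
  have H : forall B B2, partial_subring B B2 -> F1_gens S B B2 ->
     B2 (sval a) (sval b) /\ B2 (sval a + sval b) (sval c).
    move=> B B2 hB hG; case: (hB) => _ _ _ _ [_ _ hA _].
    apply: (proj2 (hA _ _ _ (proj2_sig a B B2 hB hG) (proj2_sig b B B2 hB hG) (proj2_sig c B B2 hB hG))).
    by split; [exact: (h1 B B2 hB hG)|exact: (h2 B B2 hB hG)].
  have hab : F1_summable a b by move=> B B2 hB hG; case: (H B B2 hB hG).
  split=> //; rewrite /F1_summable F1_addE; last exact: sumF1_in.
  by move=> B B2 hB hG; case: (H B B2 hB hG).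
Qed.
Lemma F1_addA a b c : F1_summable a b -> F1_summable (F1_add a b) c ->
  F1_add (F1_add a b) c = F1_add a (F1_add b c).
Proof.
move=> h1 h2; have [h3 h4] := proj1 (F1_summableA a b c) (conj h1 h2).
apply: F1_sval_inj.
rewrite (F1_addE (sumF1_in h2)) (F1_addE (sumF1_in h4)).
by rewrite !F1_addE ?addrA //; [exact: sumF1_in|exact: sumF1_in].
Qed.
Lemma F1_mulA a b c : F1_mul (F1_mul a b) c = F1_mul a (F1_mul b c).
Proof. by apply: F1_sval_inj; rewrite /= mulrA. Qed.
Lemma F1_mulC a b : F1_mul a b = F1_mul b a.
Proof. by apply: F1_sval_inj; rewrite /= mulrC. Qed.
Lemma F1_mul1l a : F1_mul F1_one a = a.
Proof. by apply: F1_sval_inj; rewrite /= mul1r. Qed.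
Lemma F1_mul0l a : F1_mul F1_zero a = F1_zero.
Proof. by apply: F1_sval_inj; rewrite /= mul0r. Qed.
Lemma F1_summableM a1 a2 x :
  F1_summable a1 a2 -> F1_summable (F1_mul a1 x) (F1_mul a2 x).
Proof.
move=> h B B2 hB hG; case: (hB) => _ _ _ _ [_ _ _ hM].
by apply: hM; [exact: (h B B2 hB hG)|exact: (proj2_sig x B B2 hB hG)].
Qed.
Lemma F1_mulDl a1 a2 x : F1_summable a1 a2 ->
  F1_mul (F1_add a1 a2) x = F1_add (F1_mul a1 x) (F1_mul a2 x).
Proof.
move=> h; have h' := F1_summableM x h.
apply: F1_sval_inj; rewrite /= (F1_addE (sumF1_in h')) /=.
by rewrite F1_addE ?mulrDl //; exact: sumF1_in.
Qed.

Definition F1 : partial_ring :=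
  @PartialRing F1_car F1_zero F1_one F1_summable F1_add F1_mul
    F1_summable0l F1_summable0r F1_add0r F1_add0l F1_summableC F1_addC
    F1_summableA F1_addA F1_mulA F1_mulC F1_mul1l F1_mul0l
    F1_summableM F1_mulDl.

Lemma inF1_X (i : 'I_n) : inF1 S 'X_i.
Proof. by move=> B B2 _ [hX _ _]. Qed.

Definition F1_var (i : 'I_n) : F1 := exist _ 'X_i (inF1_X i).

End F1.

(* Main.v *)
From HB Require Import structures.
Require Import Defs.
From mathcomp Require Import all_boot all_order all_algebra.
From mathcomp Require Import mpoly.
Set Implicit Arguments. Unset Strict Implicit. Unset Printing Implicit Defensive.
Import Order.TTheory GRing.Theory Num.Theory.
Local Open Scope ring_scope.

Section PR.
Variable A : partial_ring.
Local Notation sm := (@pr_summable A).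
Local Notation ad := (@pr_add A).
Local Notation ml := (@pr_mul A).
Local Notation z := (pr_zero A).
Local Notation SF := (@pr_summable_from A).

Definition fsum (acc : A) (l : seq A) := foldl ad acc l.
Definition sumA (l : seq A) := fsum z l.

Lemma seq_SF l : pr_summable_seq l <-> SF z l.
Proof.
case: l => [|a l] //=; rewrite pr_add0l; split => [h|[]//]; split=> //.
exact: pr_summable0l.
Qed.

Lemma SF_cat acc l1 l2 : SF acc (l1 ++ l2) <-> SF acc l1 /\ SF (fsum acc l1) l2.
Proof.
elim: l1 acc => [|a l1 IH] acc /=; first by split => // -[].
rewrite IH; tauto.
Qed.

Lemma fsum_cat acc l1 l2 : fsum acc (l1 ++ l2) = fsum (fsum acc l1) l2.
Proof. by rewrite /fsum foldl_cat. Qed.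

Lemma sumA_cons a l : sumA (a :: l) = fsum a l.
Proof. by rewrite /sumA /= pr_add0l. Qed.

Lemma SF_accE l : forall acc,
  (SF acc l <-> SF z l /\ sm acc (sumA l)) /\
  (SF acc l -> fsum acc l = ad acc (sumA l)).
Proof.
elim: l => [|a l IH] acc.
  split; last by move=> _; rewrite /= pr_add0r.
  by split => // _; split => //; apply: pr_summable0r.
have [IH1 IH2] := IH (ad acc a); have [IHa1 IHa2] := IH a.
have [IHz1 _] := IH (ad z a).
rewrite sumA_cons /=; rewrite pr_add0l in IHz1 *.
split.
  split.
  - move=> [h1 /IH1 [h2 h3]].
    have [h4 h5] := proj1 (pr_summableA acc a (sumA l)) (conj h1 h3).
    split; first by split; [apply: pr_summable0l| apply/IHa1].
    have -> : fsum a l = ad a (sumA l) by apply: IHa2; apply/IHa1.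
    done.
  - move=> [[_ ha] hs]; have [h1 h2] := proj1 IHa1 ha.
    rewrite (IHa2 ha) in hs.
    have [h4 h5] := proj2 (pr_summableA acc a (sumA l)) (conj h2 hs).
    by split => //; apply/IH1.
move=> [h1 h]; have [h2 h3] := proj1 IH1 h.
have [h4 h5] := proj1 (pr_summableA acc a (sumA l)) (conj h1 h3).
by rewrite IH2 // pr_addA // IHa2 //; apply/IHa1.
Qed.

Lemma SF_swap acc a b l : SF acc (a :: b :: l) ->
  SF acc (b :: a :: l) /\ fsum acc (a :: b :: l) = fsum acc (b :: a :: l).
Proof.
move=> /= [h1 [h2 h3]].
have [h4 h5] := proj1 (pr_summableA acc a b) (conj h1 h2).
have h4' := pr_summableC h4.
have h5' : sm acc (ad b a) by rewrite -pr_addC.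
have [h6 h7] := proj2 (pr_summableA acc b a) (conj h4' h5').
have e : ad (ad acc a) b = ad (ad acc b) a.
  by rewrite pr_addA // pr_addA // (pr_addC h4).
by rewrite /fsum /= e in h3 *; split.
Qed.

Lemma SF_move l1 a l2 : forall acc,
  (SF acc (l1 ++ a :: l2) <-> SF acc (a :: l1 ++ l2)) /\
  (SF acc (l1 ++ a :: l2) -> fsum acc (l1 ++ a :: l2) = fsum acc (a :: l1 ++ l2)).
Proof.
elim: l1 => [|x l1 IH] acc //=.
have [IH1 IH2] := IH (ad acc x).
split.
  split.
  - move=> [h1 /IH1 h2]; have := @SF_swap acc x a (l1 ++ l2).
    by case => //.
  - move=> h; have [h' _] := SF_swap h; case: h' => h1 h2.
    by split => //; apply/IH1.
move=> [h1 h2]; have h3 : SF acc (x :: a :: l1 ++ l2) by split => //; apply/IH1.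
have [_ e] := SF_swap h3; exact: etrans (IH2 h2) e.
Qed.

Lemma SF_perm (T : eqType) (f : T -> A) (l : seq T) : forall l' acc, perm_eq l l' ->
  SF acc (map f l) -> SF acc (map f l') /\ fsum acc (map f l) = fsum acc (map f l').
Proof.
elim: l => [|a l IH] l' acc hp h.
  by move: (perm_size hp) => /= /esym /size0nil ->.
have ain : a \in l' by rewrite -(perm_mem hp) mem_head.
case/splitPr: l' / ain hp => [l1 l2] hp.
have hp' : perm_eq l (l1 ++ l2).
  by rewrite -(perm_cons a); apply: (perm_trans hp); rewrite -cat1s perm_catCA.
case: h => h1 h2; have [h3 h4] := IH _ _ hp' h2.
rewrite map_cat map_cat /= in h3 h4 *.
have [M1 M2] := SF_move (map f l1) (f a) (map f l2) acc.
have h5 : SF acc (map f l1 ++ f a :: map f l2) by apply/M1; split.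
by split => //; rewrite M2 //; exact: h4.
Qed.

Lemma SF_mulr x v : forall acc, SF acc v ->
  SF (ml acc x) [seq ml y x | y <- v] /\
  fsum (ml acc x) [seq ml y x | y <- v] = ml (fsum acc v) x.
Proof.
elim: v => [|a v IH] acc //= [h1 h2].
have [IH1 IH2] := IH _ h2.
rewrite pr_mulDl // in IH1 IH2.
by split; [split => //; apply: pr_summableM | exact: IH2].
Qed.

Lemma SF_mull x v : forall acc, SF acc v ->
  SF (ml x acc) [seq ml x y | y <- v] /\
  fsum (ml x acc) [seq ml x y | y <- v] = ml x (fsum acc v).
Proof.
move=> acc h; have := SF_mulr x h.
have -> : [seq ml y x | y <- v] = [seq ml x y | y <- v] by apply: eq_map => y; rewrite pr_mulC.
by rewrite !(pr_mulC x).
Qed.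

Lemma ml_z x : ml x z = z.
Proof. by rewrite pr_mulC pr_mul0l. Qed.

Lemma SF_prod_aux u v : SF z v -> forall acc,
  SF acc [seq ml x (sumA v) | x <- u] ->
  SF acc [seq ml x y | x <- u, y <- v] /\
  fsum acc [seq ml x y | x <- u, y <- v] = fsum acc [seq ml x (sumA v) | x <- u].
Proof.
move=> hv; elim: u => [|x u IH] acc //= [h1 h2].
have [w1 w2] := SF_mull x hv; rewrite ml_z in w1 w2.
have [[_ E1] E2] := SF_accE [seq ml x y | y <- v] acc.
have hw : SF acc [seq ml x y | y <- v] by apply: E1; split => //; rewrite /sumA w2.
have ew : fsum acc [seq ml x y | y <- v] = ad acc (ml x (sumA v)).
  by rewrite E2 // /sumA w2.
rewrite SF_cat fsum_cat ew.
have [IH1 IH2] := IH _ h2.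
by split => //; split.
Qed.

Lemma SF_prod u v : SF z u -> SF z v ->
  SF z [seq ml x y | x <- u, y <- v] /\
  sumA [seq ml x y | x <- u, y <- v] = ml (sumA u) (sumA v).
Proof.
move=> hu hv; have [h1 h2] := SF_mulr (sumA v) hu.
rewrite pr_mul0l in h1 h2.
have [k1 k2] := SF_prod_aux hv h1.
by split => //; rewrite /sumA k2 h2.
Qed.

HB.instance Definition _ := Monoid.isComLaw.Build A (pr_one A) (@pr_mul A)
  (fun a b c => esym (@pr_mulA A a b c)) (@pr_mulC A) (@pr_mul1l A).

Lemma pr_powD x a b : pr_pow x (a + b) = ml (pr_pow x a) (pr_pow x b).
Proof.
elim: a => [|a IH]; first by rewrite /pr_pow /= pr_mul1l.
by rewrite addSn /pr_pow /= -/(pr_pow _ _) IH pr_mulA.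
Qed.

Variable n : nat.
Variable c : 'I_n -> A.

Lemma mon_evalD m1 m2 : mon_eval c (m1 + m2)%MM = ml (mon_eval c m1) (mon_eval c m2).
Proof.
rewrite /mon_eval -big_split /=; apply: eq_bigr => i _.
by rewrite mnmDE pr_powD.
Qed.

Lemma mon_eval0 : mon_eval c 0%MM = pr_one A.
Proof. by rewrite /mon_eval big1 // => i _; rewrite mnm0E. Qed.

Lemma mon_evalU i : mon_eval c U_(i)%MM = c i.
Proof.
rewrite /mon_eval (bigD1 i) //= big1 => [|j ne].
  by rewrite mnm1E eqxx /pr_pow /= pr_mulC pr_mul1l pr_mulC pr_mul1l.
by rewrite mnm1E eq_sym (negbTE ne).
Qed.

End PR.
Section Poly.
Variable n : nat.
Implicit Types (p q : {mpoly int[n]}) (l : seq 'X_{1..n}).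

Definition PL l : {mpoly int[n]} := \sum_(m <- l) 'X_[m].

Lemma PL_coef l m : (PL l)@_m = (count_mem m l)%:R.
Proof.
elim: l => [|x l IH]; rewrite /PL ?big_nil ?big_cons ?mcoeff0 //.
by rewrite mcoeffD mcoeffX -/(PL l) IH /= natrD; case: (x == m).
Qed.

Lemma count_flat_nseq (f : 'X_{1..n} -> nat) (s : seq 'X_{1..n}) m : uniq s ->
  count_mem m (flatten [seq nseq (f x) x | x <- s]) = if m \in s then f m else 0%N.
Proof.
elim: s => [|x s IH] //= /andP [xs us]; rewrite count_cat count_nseq IH // inE.
case: (eqVneq x m) => [<-|ne].
  by rewrite (negbTE xs) mem_head mul1n addn0.
by rewrite in_cons (eq_sym m) (negbTE ne) /= mul0n add0n.
Qed.

Lemma count_mon_list p m : count_mem m (mon_list p) = `|p@_m|%N.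
Proof.
rewrite /mon_list count_flat_nseq ?msupp_uniq // mcoeff_msupp.
by case: eqP => // ->.
Qed.

Lemma isN_PL l : isN (PL l).
Proof. by move=> m; rewrite PL_coef ler0n. Qed.

Lemma PL_mon_list p : isN p -> PL (mon_list p) = p.
Proof.
move=> hp; apply/mpolyP => m; rewrite PL_coef count_mon_list.
by rewrite natz gez0_abs // hp.
Qed.

Lemma mon_list_PL l : perm_eq (mon_list (PL l)) l.
Proof.
apply/allP => x _; apply/eqP.
by rewrite count_mon_list PL_coef natz absz_nat.
Qed.

Lemma PL_cat l1 l2 : PL (l1 ++ l2) = PL l1 + PL l2.
Proof. by rewrite /PL big_cat. Qed.



Lemma PL_mul l1 l2 : PL l1 * PL l2 = PL [seq (x + y)%MM | x <- l1, y <- l2].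
Proof.
elim: l1 => [|x l1 IH]; first by rewrite /PL big_nil mul0r.
rewrite /= PL_cat -IH /PL big_cons mulrDl; congr (_ + _).
by rewrite big_map mulr_sumr; apply: eq_bigr => y _; rewrite mpolyXD.
Qed.

Lemma PL_perm l1 l2 : perm_eq l1 l2 -> PL l1 = PL l2.
Proof. by move=> h; rewrite /PL (perm_big _ h). Qed.

Lemma isN_D p q : isN p -> isN q -> isN (p + q).
Proof. by move=> hp hq m; rewrite mcoeffD addr_ge0. Qed.

Lemma isN_M p q : isN p -> isN q -> isN (p * q).
Proof.
by move=> hp hq; rewrite -(PL_mon_list hp) -(PL_mon_list hq) PL_mul; apply: isN_PL.
Qed.

Lemma mon_list_D p q : isN p -> isN q -> perm_eq (mon_list (p + q)) (mon_list p ++ mon_list q).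
Proof.
move=> hp hq; rewrite -{1}(PL_mon_list hp) -{1}(PL_mon_list hq) -PL_cat.
exact: mon_list_PL.
Qed.

Lemma mon_list_M p q : isN p -> isN q -> perm_eq (mon_list (p * q))
   [seq (x + y)%MM | x <- mon_list p, y <- mon_list q].
Proof.
move=> hp hq; rewrite -{1}(PL_mon_list hp) -{1}(PL_mon_list hq) PL_mul.
exact: mon_list_PL.
Qed.

Lemma mon_list_0 : mon_list (0 : {mpoly int[n]}) = [::].
Proof. by rewrite /mon_list msupp0. Qed.

Lemma mon_list_X m : perm_eq (mon_list ('X_[m] : {mpoly int[n]})) [:: m].
Proof.
have -> : ('X_[m] : {mpoly int[n]}) = PL [:: m] by rewrite /PL big_seq1.
exact: mon_list_PL.
Qed.

Lemma Xi_def (i : 'I_n) : ('X_i : {mpoly int[n]}) = 'X_[U_(i)].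
Proof. by []. Qed.

Lemma mask_exists (T : eqType) (l1 l2 : seq T) :
  (forall x, count_mem x l1 <= count_mem x l2)%N ->
  exists b : bitseq, size b = size l2 /\ perm_eq l1 (mask b l2).
Proof.
elim: l2 l1 => [|x l2 IH] l1 h.
  exists [::]; split => //; rewrite mask0.
  by case: l1 h => // y l1 /(_ y); rewrite /= eqxx.
case: (boolP (x \in l1)) => xin.
  have pr := perm_to_rem xin.
  have [b [sb pb]] : exists b : bitseq, size b = size l2 /\ perm_eq (rem x l1) (mask b l2).
    apply: IH => y; move: (h y); rewrite (permP pr) /= => hy.
    by rewrite -(leq_add2l (x == y)).
  exists (true :: b); split; first by rewrite /= sb.
  by rewrite /= (perm_trans pr) // perm_cons.
have h' : forall y, (count_mem y l1 <= count_mem y l2)%N.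
  move=> y; move: (h y) => /=; case: (eqVneq x y) => [<-|_]; last by rewrite add0n.
  by rewrite (count_memPn xin).
have [b [sb pb]] := IH l1 h'.
by exists (false :: b); split; first by rewrite /= sb.
Qed.
End Poly.
Section Main.
Variables (n : nat) (A : partial_ring) (c : 'I_n -> A) (S : seq {mpoly int[n]}).
Hypothesis HS : forall s, s \in S -> isN s.
Hypothesis Hcalc : forall s, s \in S -> calculable c s.

Local Notation z := (pr_zero A).
Local Notation SF := (@pr_summable_from A).
Local Notation ev := (mon_eval c).

Definition good (p : {mpoly int[n]}) := SF z (map ev (mon_list p)).
Definition val (p : {mpoly int[n]}) := sumA (map ev (mon_list p)).

Lemma good_perm p l : perm_eq (mon_list p) l ->
  (good p <-> SF z (map ev l)) /\ (good p -> val p = sumA (map ev l)).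
Proof.
move=> hp; split; last by move=> g; have [_ e] := SF_perm hp g.
split => g; first by have [] := SF_perm hp g.
have hp' : perm_eq l (mon_list p) by rewrite perm_sym.
by have [] := SF_perm hp' g.
Qed.

Lemma good_X m : good 'X_[m] /\ val 'X_[m] = ev m.
Proof.
have [[_ G1] G2] := good_perm (mon_list_X m).
have g : good 'X_[m] by apply: G1; split => //; apply: pr_summable0l.
by split => //; rewrite G2 // /sumA /fsum /= pr_add0l.
Qed.

Lemma good_D p q : isN p -> isN q -> good (p + q) ->
  [/\ good p, good q, pr_summable (val p) (val q) & val (p + q) = pr_add (val p) (val q)].
Proof.
move=> hp hq g; have [[G1 _] G2] := good_perm (mon_list_D hp hq).
have := G1 g; rewrite map_cat SF_cat => -[g1 g2].
have [[E1 _] E2] := SF_accE (map ev (mon_list q)) (fsum z (map ev (mon_list p))).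
have [g3 g4] := E1 g2.
split => //.
by rewrite G2 // map_cat /sumA fsum_cat E2.
Qed.

Lemma map_ev_allpairs (s t : seq 'X_{1..n}) :
  map ev [seq (x + y)%MM | x <- s, y <- t] =
  [seq pr_mul x y | x <- map ev s, y <- map ev t].
Proof.
elim: s => //= x s IH; rewrite map_cat IH; congr (_ ++ _).
by rewrite -!map_comp; apply: eq_map => y /=; rewrite mon_evalD.
Qed.

Lemma good_M p q : isN p -> isN q -> good p -> good q ->
  good (p * q) /\ val (p * q) = pr_mul (val p) (val q).
Proof.
move=> hp hq gp gq; have [[_ G1] G2] := good_perm (mon_list_M hp hq).
have [h1 h2] := SF_prod gp gq.
rewrite -map_ev_allpairs in h1 h2.
have g : good (p * q) by apply: G1.
by split => //; rewrite G2 // h2.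
Qed.

Definition BB p := isN p /\ good p.
Definition BB2 p q := [/\ isN p, isN q & good (p + q)].

Lemma isN0 : isN (0 : {mpoly int[n]}).
Proof. by move=> m; rewrite mcoeff0. Qed.

Lemma isNX m : isN ('X_[m] : {mpoly int[n]}).
Proof. by move=> k; rewrite mcoeffX ler0n. Qed.

Lemma BB_sub : partial_subring BB BB2.
Proof.
split.
- by move=> p [].
- split; first by split; [exact: isN0 | rewrite /good mon_list_0].
  by rewrite -mpolyX0; split; [exact: isNX | case: (good_X 0)].
- move=> p q [hp gp] [hq gq]; split; first exact: isN_M.
  by case: (good_M hp hq gp gq).
- move=> p q [hp hq g]; have [g1 g2 _ _] := good_D hp hq g.
  by split; split => //; exact: isN_D.
split.
- by move=> p [hp gp]; split; split => //; rewrite ?add0r ?addr0 //; exact: isN0.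
- by move=> p q [hp hq g]; split => //; rewrite addrC.
- move=> a b x [ha ga] [hb gb] [hx gx]; split.
  + move=> [[_ _ g1] [_ _ g2]].
    have hab := isN_D ha hb; have hbx := isN_D hb hx.
    rewrite -addrA in g2.
    by have [_ g3 _ _] := good_D ha hbx g2.
  + move=> [[_ _ g1] [_ _ g2]].
    have hab := isN_D ha hb; have hbx := isN_D hb hx.
    rewrite addrA in g2.
    by have [g3 _ _ _] := good_D hab hx g2.
- move=> a b x [ha hb g] [hx gx].
  split; [exact: isN_M | exact: isN_M |].
  rewrite -mulrDl; have hab := isN_D ha hb.
  by case: (good_M hab hx g gx).
Qed.

Lemma subsum_isN (q s : {mpoly int[n]}) : subsum q s -> isN q.
Proof. by move=> h m; case/andP: (h m). Qed.

Lemma subsum_good (q s : {mpoly int[n]}) : s \in S -> subsum q s -> good q.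
Proof.
move=> sS hq; have hs := HS sS.
have [b [sb pb]] : exists b : bitseq, size b = size (mon_list s) /\
    perm_eq (mon_list q) (mask b (mon_list s)).
  apply: mask_exists => m; rewrite !count_mon_list.
  case/andP: (hq m) => q0 qs.
  by rewrite -lez_nat !gez0_abs // (le_trans q0 qs).
have := Hcalc sS; rewrite /calculable => /(_ b sb).
rewrite seq_SF -map_mask => h.
by have [[_ G] _] := good_perm pb; apply: G.
Qed.

Lemma BB_gens : F1_gens S BB BB2.
Proof.
split.
- move=> i; rewrite Xi_def; split; [exact: isNX | by case: (good_X U_(i))].
- by move=> s q sS hq; split; [exact: subsum_isN hq | exact: subsum_good hq].
- by move=> s a b sS ha hb hab; split => //; exact: subsum_good hab.
Qed.

Lemma inF1_BB p : inF1 S p -> BB p.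
Proof. by move=> h; apply: h; [exact: BB_sub | exact: BB_gens]. Qed.

Lemma sumF1_BB2 p q : sumF1 S p q -> BB2 p q.
Proof. by move=> h; apply: h; [exact: BB_sub | exact: BB_gens]. Qed.

Definition phi0 (x : F1 S) : A := val (sval x).

Lemma phi0_hom : pr_hom phi0.
Proof.
split.
- by rewrite /phi0 /= /val mon_list_0.
- by rewrite /phi0 /= -mpolyX0; case: (good_X 0) => _ ->; rewrite mon_eval0.
- move=> [p hp] [q hq]; rewrite /phi0 /=.
  have [np gp] := inF1_BB hp; have [nq gq] := inF1_BB hq.
  by case: (good_M np nq gp gq).
- move=> [p hp] [q hq] h; have [np nq g] := sumF1_BB2 h.
  have [_ _ s e] := good_D np nq g.
  split => //; rewrite /phi0 /= F1_addE //=; exact: sumF1_in h.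
Qed.

Lemma phi0_var i : phi0 (F1_var S i) = c i.
Proof. by rewrite /phi0 /= Xi_def; case: (good_X U_(i)) => _ ->; rewrite mon_evalU. Qed.

Lemma sumF1_A a b x : inF1 S a -> inF1 S b -> inF1 S x ->
  (sumF1 S a b /\ sumF1 S (a + b) x) <-> (sumF1 S b x /\ sumF1 S a (b + x)).
Proof.
move=> ha hb hx; split => -[h1 h2].
- have H : forall B B2, partial_subring B B2 -> F1_gens S B B2 -> B2 b x /\ B2 a (b + x).
    move=> B B2 hB hG; case: (hB) => _ _ _ _ [_ _ hA _].
    apply/(hA _ _ _ (ha B B2 hB hG) (hb B B2 hB hG) (hx B B2 hB hG)).
    by split; [exact: (h1 B B2 hB hG) | exact: (h2 B B2 hB hG)].
  by split => B B2 hB hG; case: (H B B2 hB hG).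
- have H : forall B B2, partial_subring B B2 -> F1_gens S B B2 -> B2 a b /\ B2 (a + b) x.
    move=> B B2 hB hG; case: (hB) => _ _ _ _ [_ _ hA _].
    apply/(hA _ _ _ (ha B B2 hB hG) (hb B B2 hB hG) (hx B B2 hB hG)).
    by split; [exact: (h1 B B2 hB hG) | exact: (h2 B B2 hB hG)].
  by split => B B2 hB hG; case: (H B B2 hB hG).
Qed.

Lemma sumF1_M a b x : sumF1 S a b -> inF1 S x -> sumF1 S (a * x) (b * x).
Proof.
move=> h hx B B2 hB hG; case: (hB) => _ _ _ _ [_ _ _ hM].
by apply: hM; [exact: (h B B2 hB hG) | exact: (hx B B2 hB hG)].
Qed.

Lemma sumF1_gen s a b : s \in S -> isN a -> isN b -> subsum (a + b) s -> sumF1 S a b.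
Proof. by move=> sS ha hb hs B B2 _ [_ _ hG]; exact: hG sS ha hb hs. Qed.

Section Uniq.
Variables phi psi : F1 S -> A.
Hypotheses (hphi : pr_hom phi) (hpsi : pr_hom psi).
Hypotheses (vphi : forall i, phi (F1_var S i) = c i) (vpsi : forall i, psi (F1_var S i) = c i).

Definition UB (p : {mpoly int[n]}) := [/\ isN p, inF1 S p &
  forall h : inF1 S p, psi (exist _ p h) = phi (exist _ p h)].
Definition UB2 p q := [/\ UB p, UB q & sumF1 S p q].

Lemma UB0 : UB 0.
Proof.
split; [exact: isN0 | exact: inF1_0 | move=> h].
have -> : exist _ 0 h = pr_zero (F1 S) by apply: F1_sval_inj.
by case: hphi => -> _ _ _; case: hpsi => -> _ _ _.
Qed.

Lemma UB1 : UB 1.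
Proof.
split; [by rewrite -mpolyX0; exact: isNX | exact: inF1_1 | move=> h].
have -> : exist _ 1 h = pr_one (F1 S) by apply: F1_sval_inj.
by case: hphi => _ -> _ _; case: hpsi => _ -> _ _.
Qed.

Lemma UB_M p q : UB p -> UB q -> UB (p * q).
Proof.
move=> [np ip ep] [nq iq eq]; split; [exact: isN_M | exact: inF1_M | move=> h].
have -> : exist _ (p * q) h = pr_mul (exist _ p ip : F1 S) (exist _ q iq) by apply: F1_sval_inj.
by case: hphi => _ _ -> _; case: hpsi => _ _ -> _; rewrite ep eq.
Qed.

Lemma UB_D p q : UB p -> UB q -> sumF1 S p q -> UB (p + q).
Proof.
move=> [np ip ep] [nq iq eq] s; split; [exact: isN_D | exact: sumF1_in | move=> h].
have -> : exist _ (p + q) h = pr_add (exist _ p ip : F1 S) (exist _ q iq).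
  by apply: F1_sval_inj; rewrite /= F1_addE.
case: hphi => _ _ _ /(_ (exist _ p ip) (exist _ q iq) s) [_ ->].
case: hpsi => _ _ _ /(_ (exist _ p ip) (exist _ q iq) s) [_ ->].
by rewrite ep eq.
Qed.

Lemma UB_sub : partial_subring UB UB2.
Proof.
split.
- by move=> p [].
- by split; [exact: UB0 | exact: UB1].
- exact: UB_M.
- by move=> p q [u1 u2 s]; split => //; exact: UB_D.
split.
- move=> p up; case: (up) => _ ip _; split; split => //; try exact: UB0.
  + exact: (F1_summable0l (exist _ p ip : F1 S)).
  + exact: (F1_summable0r (exist _ p ip : F1 S)).
- move=> p q [u1 u2 s]; split => //.
  case: u1 u2 => _ ip _ [_ iq _].
  exact: (F1_summableC (s : F1_summable (exist _ p ip : F1 S) (exist _ q iq))).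
- move=> a b x ua ub ux.
  case: (ua) => _ ia _; case: (ub) => _ ib _; case: (ux) => _ ix _.
  split.
  + move=> [[_ _ s1] [_ _ s2]].
    have [s3 s4] := proj1 (sumF1_A ia ib ix) (conj s1 s2).
    by split; split => //; exact: UB_D.
  + move=> [[_ _ s1] [_ _ s2]].
    have [s3 s4] := proj2 (sumF1_A ia ib ix) (conj s1 s2).
    by split; split => //; exact: UB_D.
- move=> a b x [ua ub s] ux; case: (ux) => _ ix _.
  by split; [exact: UB_M | exact: UB_M | exact: sumF1_M].
Qed.

Lemma UB_Xi i : UB 'X_i.
Proof.
split; [by rewrite Xi_def; exact: isNX | exact: inF1_X | move=> h].
have -> : exist _ 'X_i h = F1_var S i by apply: F1_sval_inj.
by rewrite vphi vpsi.
Qed.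

Lemma UB_X m : UB 'X_[m].
Proof.
rewrite mpolyXE_id; apply: (big_ind UB); [exact: UB1 | exact: UB_M |].
move=> i _; elim: (m i) => [|k IH]; first by rewrite expr0; exact: UB1.
by rewrite exprS; apply: UB_M => //; exact: UB_Xi.
Qed.

Lemma UB_PL s l : s \in S -> subsum (PL l) s -> UB (PL l).
Proof.
move=> sS; elim: l => [|m l IH] hs; first by rewrite /PL big_nil; exact: UB0.
have e : PL (m :: l) = 'X_[m] + PL l by rewrite /PL big_cons.
have hl : subsum (PL l) s.
  move=> k; case/andP: (hs k) => _ h; rewrite PL_coef ler0n /=.
  apply: le_trans h; rewrite PL_coef ler_nat /=; exact: leq_addl.
rewrite e; apply: UB_D; [exact: UB_X | exact: IH |].
by apply: (sumF1_gen sS); [exact: isNX | exact: isN_PL | rewrite -e].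
Qed.

Lemma UB_gens : F1_gens S UB UB2.
Proof.
split.
- exact: UB_Xi.
- move=> s q sS hq; have nq := subsum_isN hq.
  by rewrite -(PL_mon_list nq); apply: (UB_PL sS); rewrite PL_mon_list.
- move=> s a b sS ha hb hab.
  have sa : subsum a s.
    move=> m; case/andP: (hab m) => _ h; rewrite ha /=.
    by apply: le_trans h; rewrite mcoeffD lerDl hb.
  have sb : subsum b s.
    move=> m; case/andP: (hab m) => _ h; rewrite hb /=.
    by apply: le_trans h; rewrite mcoeffD lerDr ha.
  split; [| | exact: (sumF1_gen sS)].
  + by rewrite -(PL_mon_list ha); apply: (UB_PL sS); rewrite PL_mon_list.
  + by rewrite -(PL_mon_list hb); apply: (UB_PL sS); rewrite PL_mon_list.
Qed.

Lemma hom_uniq x : psi x = phi x.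
Proof.
case: x => p h; have [_ _ e] : UB p by apply: h; [exact: UB_sub | exact: UB_gens].
exact: e.
Qed.
End Uniq.
End Main.

Unset Implicit Arguments.

Theorem mainTheorem6 (n : nat) (A : partial_ring) (c : 'I_n -> A)
    (S : seq {mpoly int[n]})
    (HS : forall s, s \in S -> isN s)
    (Hcalc : forall s, s \in S -> calculable c s) :
  exists phi : F1 S -> A,
    [/\ pr_hom phi,
        (forall i : 'I_n, phi (F1_var S i) = c i) &
        (forall psi : F1 S -> A, pr_hom psi ->
           (forall i : 'I_n, psi (F1_var S i) = c i) ->
           forall p, psi p = phi p)].
Proof.
exists (@phi0 n A c S); split.
- exact: (phi0_hom HS Hcalc).
- exact: phi0_var.
- move=> psi hpsi vpsi p.
  exact: (hom_uniq (phi0_hom HS Hcalc) hpsi (phi0_var c S) vpsi).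
Qed.
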